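(* Let $N\ge4$, let $e_1,\dots,e_N$ be the standard basis of $\mathbb{R}^N$, $F(x)=\prod_{i=1}^N|x-e_i|^2$, $f=\log F$, and $B=\frac1N\sum_{i=1}^N e_i$. Then $F$ has its $N$ absolute minima at $e_1,\dots,e_N$; $B$ is a critical point of $f$ whose Hessian has the eigenvalue $\frac{2N^2}{N-1}$ with multiplicity $1$ (eigenvector $B$) and the eigenvalue $2(N-3)\left(\frac{N}{N-1}\right)^2$ with multiplicity $N-1$, so $B$ is a nondegenerate local minimum; and the $N$ points $Q_i=\frac{2}{N-1}B+\frac{N-3}{N-1}e_i$ ($1\le i\le N$) are nondegenerate critical points of $f$ of negativity index $1$.
   Context: $|\cdot|$ is the Euclidean norm. The negativity index of a nondegenerate critical point is the number of negative eigenvalues of the Hessian. *)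

(* Defs.v *)
From HB Require Import structures.
From Stdlib Require Import Reals Lra ClassicalEpsilon FunctionalExtensionality.
From mathcomp Require Import all_boot all_order all_algebra.

Set Implicit Arguments.
Unset Strict Implicit.
Unset Printing Implicit Defensive.

Local Open Scope R_scope.

Definition Req_bool (x y : R) : bool := if Req_EM_T x y then true else false.

Lemma Req_boolP : Equality.axiom Req_bool.
Proof. move=> x y; rewrite /Req_bool; case: Req_EM_T => H; by constructor. Qed.

HB.instance Definition _ := hasDecEq.Build R Req_boolP.

Definition R_find (P : pred R) (n : nat) : option R :=
  match excluded_middle_informative (exists x, P x) with
  | left H => Some (proj1_sig (constructive_indefinite_description _ H))
  | right _ => None
  end.

Lemma R_find_correct P n x : R_find P n = Some x -> P x.
Proof.
rewrite /R_find; case: excluded_middle_informative => // H [<-].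
exact: proj2_sig (constructive_indefinite_description _ H).
Qed.

Lemma R_find_complete (P : pred R) : (exists x, P x) -> exists n, R_find P n.
Proof.
move=> H; exists 0%N; rewrite /R_find; case: excluded_middle_informative => //.
Qed.

Lemma R_find_ext (P Q : pred R) : P =1 Q -> R_find P =1 R_find Q.
Proof.
move=> E; have -> : P = Q by apply: functional_extensionality.
by [].
Qed.

HB.instance Definition _ :=
  hasChoice.Build R R_find_correct R_find_complete R_find_ext.

Lemma R_addrA : associative Rplus. Proof. move=> x y z; ring. Qed.
Lemma R_addrC : commutative Rplus. Proof. move=> x y; ring. Qed.
Lemma R_add0r : left_id 0 Rplus. Proof. move=> x; ring. Qed.
Lemma R_addNr : left_inverse 0 Ropp Rplus. Proof. move=> x; ring. Qed.

HB.instance Definition _ :=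
  GRing.isZmodule.Build R R_addrA R_addrC R_add0r R_addNr.

Lemma R_mulrA : associative Rmult. Proof. move=> x y z; ring. Qed.
Lemma R_mulrC : commutative Rmult. Proof. move=> x y; ring. Qed.
Lemma R_mul1r : left_id 1 Rmult. Proof. move=> x; ring. Qed.
Lemma R_mulrDl : left_distributive Rmult Rplus. Proof. move=> x y z; ring. Qed.
Lemma R_one_neq0 : (1 : R) != 0.
Proof. apply/eqP => H; exact: R1_neq_R0 H. Qed.

HB.instance Definition _ :=
  GRing.Zmodule_isComNzRing.Build R R_mulrA R_mulrC R_mul1r R_mulrDl R_one_neq0.

Definition R_inv (x : R) : R := if Req_bool x 0 then 0 else Rinv x.

Lemma R_mulVf (x : R) : x != 0 -> R_inv x * x = 1.
Proof.
move=> /eqP Hx; rewrite /R_inv /Req_bool.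
destruct (Req_EM_T x 0) as [E|E]; first by [].
exact: Rinv_l.
Qed.

Lemma R_inv0 : R_inv 0 = 0.
Proof. by rewrite /R_inv /Req_bool; case: Req_EM_T. Qed.

HB.instance Definition _ := GRing.ComNzRing_isField.Build R R_mulVf R_inv0.

Definition vec (N : nat) := 'I_N -> R.

Definition ebasis (N : nat) (i : 'I_N) : vec N :=
  fun j => if j == i then 1 else 0.

Definition shift (N : nat) (x : vec N) (i : 'I_N) (t : R) : vec N :=
  fun j => x j + t * ebasis i j.

Definition dist2 (N : nat) (x y : vec N) : R :=
  \big[Rplus/0]_(k < N) (x k - y k) ^ 2.

Definition has_partial (N : nat) (f : vec N -> R) (i : 'I_N) (x : vec N)
    (l : R) : Prop :=
  derivable_pt_lim (fun t => f (shift x i t)) 0 l.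

Definition critical_point (N : nat) (f : vec N -> R) (x : vec N) : Prop :=
  forall i, has_partial f i x 0.

Definition is_hessian (N : nat) (f : vec N -> R) (x : vec N)
    (H : 'M[R]_N) : Prop :=
  exists (d : R) (g : 'I_N -> vec N -> R), 0 < d /\
    (forall i y, dist2 y x < d * d -> has_partial f i y (g i y)) /\
    (forall i j, has_partial (g i) j x (H i j)).

Definition nondegenerate_hess (N : nat) (H : 'M[R]_N) : Prop := H \in unitmx.

Definition eig_mult (N : nat) (H : 'M[R]_N) (a : R) : nat :=
  \rank (eigenspace H a).

(* negativity index: number of negative eigenvalues counted with
   multiplicity.  s lists (without repetition) reals containing all
   negative eigenvalues; the index is the total multiplicity. *)
Definition negativity_index (N : nat) (H : 'M[R]_N) (k : nat) : Prop :=
  exists s : seq R, uniq s /\ (forall a, a \in s -> a < 0) /\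
    (forall a, a < 0 -> eigenvalue H a -> a \in s) /\
    (\sum_(a <- s) eig_mult H a)%N = k.

Definition Fprod (N : nat) (x : vec N) : R :=
  \big[Rmult/1]_(i < N) dist2 x (ebasis i).

Definition flog (N : nat) (x : vec N) : R := ln (Fprod x).

Definition barycenter (N : nat) : vec N := fun _ => / INR N.
Arguments barycenter : clear implicits.

Definition Qpt (N : nat) (i : 'I_N) : vec N :=
  fun j => 2 / (INR N - 1) * barycenter N j
           + (INR N - 3) / (INR N - 1) * ebasis i j.

(* a vector as a row vector (MathComp convention: v *m H = a *: v) *)
Definition rowv (N : nat) (v : vec N) : 'rV[R]_N := \row_j v j.

Definition lambda1 (N : nat) : R := 2 * INR N ^ 2 / (INR N - 1).
Definition lambda2 (N : nat) : R := 2 * (INR N - 3) * (INR N / (INR N - 1)) ^ 2.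

(* Main.v *)
Require Import Defs.
From Stdlib Require Import Reals Lra Lia FunctionalExtensionality Classical.
From HB Require Import structures.
From mathcomp Require Import all_boot all_order all_algebra.
Set Implicit Arguments. Unset Strict Implicit. Unset Printing Implicit Defensive.
Local Open Scope R_scope.

HB.instance Definition _ := Monoid.isComLaw.Build R 0 Rplus R_addrA R_addrC R_add0r.
HB.instance Definition _ := Monoid.isComLaw.Build R 1 Rmult R_mulrA R_mulrC R_mul1r.

Notation d01 b := (if b then 1 else 0).

Lemma sum_delta N (a : 'I_N) (F : 'I_N -> R) :
  \big[Rplus/0]_(k<N) (d01 (k == a) * F k) = F a.
Proof.
rewrite (bigD1 a) //= eqxx big1 => [|k]; rewrite ?andTb; try move=> /negbTE ->; lra.
Qed.

Lemma sum_delta' N (a : 'I_N) (F : 'I_N -> R) :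
  \big[Rplus/0]_(k<N) (d01 (a == k) * F k) = F a.
Proof.
rewrite -[RHS](sum_delta a F); apply: eq_bigr => k _; by rewrite eq_sym.
Qed.

Lemma sum_const N (c : R) : \big[Rplus/0]_(k<N) c = INR N * c.
Proof.
rewrite big_const_ord; elim: N => [|n IH] /=; first lra.
rewrite IH; case: n {IH} => [|n] /=; lra.
Qed.

Lemma sum_add N (F G : 'I_N -> R) :
  \big[Rplus/0]_(k<N) (F k + G k) = \big[Rplus/0]_(k<N) F k + \big[Rplus/0]_(k<N) G k.
Proof. exact: big_split. Qed.

Lemma sum_scal N (c : R) (F : 'I_N -> R) :
  \big[Rplus/0]_(k<N) (c * F k) = c * \big[Rplus/0]_(k<N) F k.
Proof.
apply: (big_ind2 (fun a b => a = c * b)) => [|a1 a2 b1 b2 -> ->|]; try lra; by [].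
Qed.

Lemma sum_ext N (F G : 'I_N -> R) : (forall k, F k = G k) ->
  \big[Rplus/0]_(k<N) F k = \big[Rplus/0]_(k<N) G k.
Proof. move=> H; apply: eq_bigr => k _; exact: H. Qed.

Lemma sum_le N (F G : 'I_N -> R) : (forall k, F k <= G k) ->
  \big[Rplus/0]_(k<N) F k <= \big[Rplus/0]_(k<N) G k.
Proof. move=> H; apply: (big_ind2 (fun a b => a <= b)) => //; try lra; move=> *; try lra; exact: H. Qed.

Lemma sum_ge0 N (F : 'I_N -> R) : (forall k, 0 <= F k) -> 0 <= \big[Rplus/0]_(k<N) F k.
Proof. move=> H; apply: (big_ind (fun a => 0 <= a)) => //; try lra; move=> *; try lra; exact: H. Qed.

Lemma sum_ge_term N (F : 'I_N -> R) a : (forall k, 0 <= F k) -> F a <= \big[Rplus/0]_(k<N) F k.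
Proof.
move=> H; rewrite (bigD1 a) //=.
apply: (Rle_trans _ (F a + 0)); first lra. apply: Rplus_le_compat_l.
apply: (big_ind (fun x => 0 <= x)) => //; try lra; move=> *; try lra; exact: H.
Qed.

Lemma prod_pos N (F : 'I_N -> R) : (forall k, 0 < F k) -> 0 < \big[Rmult/1]_(k<N) F k.
Proof. move=> H; apply: (big_ind (fun a => 0 < a)) => //; try lra. move=> *; nra. Qed.

Lemma prod_ge0 N (F : 'I_N -> R) : (forall k, 0 <= F k) -> 0 <= \big[Rmult/1]_(k<N) F k.
Proof. move=> H; apply: (big_ind (fun a => 0 <= a)) => //; try lra. move=> *; nra. Qed.

Lemma ln_prod N (F : 'I_N -> R) : (forall k, 0 < F k) ->
  ln (\big[Rmult/1]_(k<N) F k) = \big[Rplus/0]_(k<N) ln (F k).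
Proof.
move=> H.
suff: 0 < \big[Rmult/1]_(k<N) F k /\ ln (\big[Rmult/1]_(k<N) F k) = \big[Rplus/0]_(k<N) ln (F k) by case.
apply: (big_ind2 (fun a b => 0 < a /\ ln a = b)).
- split; [lra| exact: ln_1].
- move=> a1 a2 b1 b2 [h1 <-] [h2 <-]; split; [nra| exact: ln_mult].
- move=> k _; split => //; exact: H.
Qed.


Definition nrm2 N (x : vec N) := \big[Rplus/0]_(m<N) x m ^ 2.

Lemma ebasisE N (i j : 'I_N) : ebasis i j = d01 (j == i). Proof. by []. Qed.

Lemma dist2_shift N (x y : vec N) i t :
  dist2 (shift x i t) y = dist2 x y + 2 * t * (x i - y i) + t ^ 2.
Proof.
rewrite /dist2 /shift.
transitivity (\big[Rplus/0]_(m<N) ((x m - y m) ^ 2 + (2 * t * (d01 (m == i) * (x m - y m))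
   + t ^ 2 * (d01 (m == i) * 1)))).
  apply: sum_ext => m; rewrite ebasisE; case: (m == i); ring.
rewrite !sum_add !sum_scal !sum_delta; ring.
Qed.

Lemma dist2_e N (x : vec N) k : dist2 x (ebasis k) = nrm2 x - 2 * x k + 1.
Proof.
rewrite /dist2 /nrm2.
transitivity (\big[Rplus/0]_(m<N) (x m ^ 2 + ((-2) * (d01 (m == k) * x m) + (d01 (m == k) * 1)))).
  apply: sum_ext => m; rewrite ebasisE; case: (m == k); ring.
rewrite !sum_add !sum_scal !sum_delta; ring.
Qed.

Lemma dist2_sym N (x y : vec N) : dist2 x y = dist2 y x.
Proof. apply: sum_ext => m; ring. Qed.

Lemma dist2_ge0 N (x y : vec N) : 0 <= dist2 x y.
Proof. apply: sum_ge0 => m; exact: pow2_ge_0. Qed.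

Lemma dist2_tri N (x y z : vec N) : dist2 x z <= 2 * dist2 x y + 2 * dist2 y z.
Proof.
rewrite /dist2 -!sum_scal -sum_add; apply: sum_le => m. have := pow2_ge_0 (x m - 2 * y m + z m). nra.
Qed.

Lemma dist2_eq0 N (x y : vec N) : dist2 x y = 0 -> x = y.
Proof.
move=> H; apply: functional_extensionality => m.
have h : (x m - y m)^2 <= dist2 x y.
  exact: (@sum_ge_term N (fun k => (x k - y k)^2) m (fun k => pow2_ge_0 _)).
rewrite H in h. have := pow2_ge_0 (x m - y m). nra.
Qed.

Lemma dpl_ext (f g : R -> R) x l : (forall t, f t = g t) ->
  derivable_pt_lim f x l -> derivable_pt_lim g x l.
Proof. by move=> H; have -> : f = g by apply: functional_extensionality. Qed.

Lemma dpl_eq (f : R -> R) x l l' : l = l' -> derivable_pt_lim f x l -> derivable_pt_lim f x l'.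
Proof. by move=> ->. Qed.

Lemma dpl_sum (I : Type) (s : seq I) (f : I -> R -> R) (l : I -> R) t0 :
  (forall k, derivable_pt_lim (f k) t0 (l k)) ->
  derivable_pt_lim (fun t => \big[Rplus/0]_(k <- s) f k t) t0 (\big[Rplus/0]_(k <- s) l k).
Proof.
move=> H; elim: s => [|a s IH].
  apply: (dpl_ext (f := fun _ => 0)); first by move=> t; rewrite big_nil.
  rewrite big_nil; exact: derivable_pt_lim_const.
apply: (dpl_ext (f := (f a + (fun t => \big[Rplus/0]_(k <- s) f k t))%F)).
  by move=> t; rewrite big_cons.
rewrite big_cons; exact: derivable_pt_lim_plus.
Qed.

Lemma dpl_prod (I : Type) (s : seq I) (f : I -> R -> R) (l : I -> R) t0 :
  (forall k, derivable_pt_lim (f k) t0 (l k)) -> (forall k, f k t0 <> 0) ->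
  derivable_pt_lim (fun t => \big[Rmult/1]_(k <- s) f k t) t0
    ((\big[Rmult/1]_(k <- s) f k t0) * \big[Rplus/0]_(k <- s) (l k / f k t0)).
Proof.
move=> H Hn; elim: s => [|a s IH].
  apply: (dpl_ext (f := fun _ => 1)); first by move=> t; rewrite big_nil.
  rewrite !big_nil; apply: (dpl_eq (l := 0)); first ring. exact: derivable_pt_lim_const.
apply: (dpl_ext (f := (f a * (fun t => \big[Rmult/1]_(k <- s) f k t))%F)).
  by move=> t; rewrite big_cons.
rewrite !big_cons; apply: dpl_eq; last (apply: derivable_pt_lim_mult; [exact: H | exact: IH]).
have := Hn a; move: (\big[Rmult/1]_(j <- s) f j t0) (\big[Rplus/0]_(j <- s) (l j / f j t0)) => P S h.
field; exact: h.
Qed.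

Lemma dpl_quad a b t0 : derivable_pt_lim (fun t => a + 2 * t * b + t ^ 2) t0 (2 * b + 2 * t0).
Proof.
apply: (dpl_ext (f := (fct_cte a + (mult_real_fct (2 * b) Ranalysis1.id + (Ranalysis1.id * Ranalysis1.id)))%F)).
  move=> t; cbv beta delta [plus_fct mult_real_fct fct_cte mult_fct Ranalysis1.id]; ring.
apply: dpl_eq; last first.
  apply: derivable_pt_lim_plus; first exact: derivable_pt_lim_const.
  apply: derivable_pt_lim_plus; first by apply: derivable_pt_lim_scal; exact: derivable_pt_lim_id.
  apply: derivable_pt_lim_mult; exact: derivable_pt_lim_id.
cbv beta delta [Ranalysis1.id]; ring.
Qed.

Lemma dpl_lin a b t0 : derivable_pt_lim (fun t => a + t * b) t0 b.
Proof.
apply: (dpl_ext (f := (fct_cte a + (mult_real_fct b Ranalysis1.id))%F)).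
  move=> t; cbv beta delta [plus_fct mult_real_fct fct_cte Ranalysis1.id]; ring.
apply: dpl_eq; last first.
  apply: derivable_pt_lim_plus; first exact: derivable_pt_lim_const.
  by apply: derivable_pt_lim_scal; exact: derivable_pt_lim_id.
ring.
Qed.

Definition gradf N (x : vec N) (i : 'I_N) : R :=
  \big[Rplus/0]_(k<N) (2 * (x i - ebasis k i) / dist2 x (ebasis k)).
Definition hessf N (x : vec N) (i j : 'I_N) : R :=
  \big[Rplus/0]_(k<N) ((2 * ebasis j i * dist2 x (ebasis k)
        - 2 * (x j - ebasis k j) * (2 * (x i - ebasis k i))) / (dist2 x (ebasis k)) ^ 2).

Lemma partial_flog N (x : vec N) i : (forall k, 0 < dist2 x (ebasis k)) ->
  has_partial (@flog N) i x (gradf x i).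
Proof.
move=> Hp; rewrite /has_partial /flog.
pose f k t := dist2 x (ebasis k) + 2 * t * (x i - ebasis k i) + t ^ 2.
apply: (dpl_ext (f := Ranalysis1.comp ln (fun t => \big[Rmult/1]_(k<N) f k t))).
  move=> t; rewrite /Ranalysis1.comp /Fprod; congr ln; apply: eq_bigr => k _; by rewrite dist2_shift.
have Hf0 k : f k 0 = dist2 x (ebasis k) by rewrite /f; ring.
have HP : \big[Rmult/1]_(k<N) f k 0 = Fprod x.
  rewrite /Fprod; apply: eq_bigr => k _; exact: Hf0.
have HPp : 0 < Fprod x by apply: prod_pos.
apply: dpl_eq; last first.
  apply: derivable_pt_lim_comp.
    apply: (@dpl_prod _ _ f (fun k => 2 * (x i - ebasis k i)) 0).
      move=> k; apply: (dpl_eq _ (dpl_quad _ _ 0)); ring.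
    move=> k; rewrite Hf0; have := Hp k; lra.
  apply: derivable_pt_lim_ln. rewrite HP; exact: HPp.
rewrite HP /gradf.
have -> : \big[Rplus/0]_(k < N) (2 * (x i - ebasis k i) / f k 0) =
          \big[Rplus/0]_(k < N) (2 * (x i - ebasis k i) / dist2 x (ebasis k)).
  apply: eq_bigr => k _; by rewrite Hf0.
field; lra.
Qed.

Lemma partial_grad N (x : vec N) i j : (forall k, 0 < dist2 x (ebasis k)) ->
  has_partial (fun y => gradf y i) j x (hessf x i j).
Proof.
move=> Hp; rewrite /has_partial /gradf /hessf.
pose F := fun t => \big[Rplus/0]_(k<N)
   (div_fct (fun t => 2 * (x i - ebasis k i) + t * (2 * ebasis j i))
    (fun t => dist2 x (ebasis k) + 2 * t * (x j - ebasis k j) + t ^ 2) t).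
apply: (@dpl_ext F).
  move=> t; apply: eq_bigr => k _; rewrite /div_fct dist2_shift /shift; congr (_ / _); ring.
apply: dpl_sum => k.
apply: dpl_eq; last first.
  apply: derivable_pt_lim_div; [exact: dpl_lin | exact: dpl_quad |].
  have := Hp k; lra.
have := Hp k; rewrite /Rsqr; move=> h; field; lra.
Qed.

Lemma hessian_gen N (x : vec N) m : 0 < m -> (forall k, m <= dist2 x (ebasis k)) ->
  is_hessian (@flog N) x (\matrix_(i,j) hessf x i j)%R.
Proof.
move=> Hm Hk. exists (Rmin 1 (m/4)), (fun i y => gradf y i).
have Hd : 0 < Rmin 1 (m/4) by apply: Rmin_pos; lra.
have Hd1 := Rmin_l 1 (m/4). have Hd2 := Rmin_r 1 (m/4).
split; [exact: Hd | split].
- move=> i y Hy; apply: partial_flog => k.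
  have h1 := dist2_tri x y (ebasis k). have := Hk k. rewrite (dist2_sym x y) in h1.
  have : Rmin 1 (m/4) * Rmin 1 (m/4) <= Rmin 1 (m/4) by nra.
  lra.
- move=> i j; rewrite mxE; apply: partial_grad => k; have := Hk k; lra.
Qed.

Definition S1 N (x : vec N) := \big[Rplus/0]_(k<N) / dist2 x (ebasis k).
Definition S2 N (x : vec N) := \big[Rplus/0]_(k<N) / dist2 x (ebasis k) ^ 2.

Lemma gradf_E N (x : vec N) i : (forall k, dist2 x (ebasis k) <> 0) ->
  gradf x i = 2 * (x i * S1 x - / dist2 x (ebasis i)).
Proof.
move=> H; rewrite /gradf /S1.
transitivity (\big[Rplus/0]_(k<N) ((2 * x i) * / dist2 x (ebasis k)
   + (-2) * (d01 (i == k) * / dist2 x (ebasis k)))).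
  apply: sum_ext => k; rewrite ebasisE; case: (i == k); field; exact: H.
rewrite sum_add !sum_scal sum_delta'; ring.
Qed.

Lemma hessf_E N (x : vec N) i j : (forall k, dist2 x (ebasis k) <> 0) ->
  hessf x i j = 2 * d01 (i == j) * S1 x - 4 * x i * x j * S2 x
    + 4 * x i / dist2 x (ebasis j) ^ 2 + 4 * x j / dist2 x (ebasis i) ^ 2
    - 4 * d01 (j == i) / dist2 x (ebasis i) ^ 2.
Proof.
move=> H; rewrite /hessf /S1 /S2.
transitivity (\big[Rplus/0]_(k<N) ((2 * d01 (i == j)) * / dist2 x (ebasis k)
   + ((-4 * x i * x j) * / dist2 x (ebasis k) ^ 2
   + ((4 * x i) * (d01 (j == k) * / dist2 x (ebasis k) ^ 2)
   + ((4 * x j) * (d01 (i == k) * / dist2 x (ebasis k) ^ 2)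
   + (-4) * (d01 (i == k) * (d01 (j == k) * / dist2 x (ebasis k) ^ 2))))))).
  apply: sum_ext => k; rewrite !ebasisE; have := H k.
  case: (i == k); case: (j == k); move=> h; field; exact: h.
rewrite !sum_add !sum_scal !sum_delta'. field; split; exact: H.
Qed.

Lemma INR_ge4 N : (4 <= N)%N -> 4 <= INR N.
Proof. move=> h; replace 4 with (INR 4) by (simpl; ring); apply: le_INR; exact/leP. Qed.

Section B.
Variable N : nat.
Hypothesis hN : (4 <= N)%N.
Let n := INR N.
Let hn : 4 <= n. Proof. exact: INR_ge4. Qed.

Lemma distB k : dist2 (barycenter N) (ebasis k) = (n - 1) / n.
Proof.
rewrite dist2_e /nrm2 /barycenter sum_const -/n; field; lra.
Qed.

Lemma distB_ne0 k : dist2 (barycenter N) (ebasis k) <> 0.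
Proof. rewrite distB; apply: Rgt_not_eq; apply: Rdiv_lt_0_compat; lra. Qed.

Lemma S1B : S1 (barycenter N) = n * (n / (n - 1)).
Proof. rewrite /S1 (sum_ext (G := fun _ => n / (n-1))) ?sum_const // => k; rewrite distB; field; lra. Qed.

Lemma S2B : S2 (barycenter N) = n * (n / (n - 1)) ^ 2.
Proof. rewrite /S2 (sum_ext (G := fun _ => (n / (n-1)) ^ 2)) ?sum_const // => k; rewrite distB; field; lra. Qed.

Lemma gradB i : gradf (barycenter N) i = 0.
Proof.
rewrite gradf_E; last exact: distB_ne0.
rewrite S1B distB /barycenter -/n; field; lra.
Qed.

Lemma hessB i j : hessf (barycenter N) i j = lambda2 N * d01 (i == j) + 4 * n / (n - 1) ^ 2.
Proof.
rewrite hessf_E; last exact: distB_ne0.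
rewrite S1B S2B !distB /barycenter /lambda2 -/n (eq_sym j i).
case: (i == j); field; lra.
Qed.
End B.

Section Q.
Variable N : nat.
Hypothesis hN : (4 <= N)%N.
Variable i0 : 'I_N.
Let n := INR N.
Let hn : 4 <= n. Proof. exact: INR_ge4. Qed.

Lemma QptE m : Qpt i0 m = 2 / (n - 1) / n + (n - 3) / (n - 1) * d01 (m == i0).
Proof. rewrite /Qpt /barycenter ebasisE -/n; field; lra. Qed.

Definition D1 := 4 / (n * (n - 1)).
Definition D0 := 2 * (n - 2) / n.

Lemma nrmQ : nrm2 (Qpt i0) = n * (2 / (n - 1) / n) ^ 2
   + (2 * (2 / (n - 1) / n) * ((n - 3) / (n - 1)) + ((n - 3) / (n - 1)) ^ 2).
Proof.
rewrite /nrm2.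
rewrite (sum_ext (G := fun m => (2 / (n - 1) / n) ^ 2 +
   (2 * (2 / (n - 1) / n) * ((n - 3) / (n - 1)) + ((n - 3) / (n - 1)) ^ 2) * (d01 (m == i0) * 1))).
  rewrite sum_add sum_const sum_scal sum_delta -/n; ring.
move=> m; rewrite QptE; case: (m == i0); ring.
Qed.

Lemma distQ k : dist2 (Qpt i0) (ebasis k) = if k == i0 then D1 else D0.
Proof.
rewrite dist2_e nrmQ QptE /D1 /D0; case: (k == i0); field; lra.
Qed.

Lemma D1pos : 0 < D1. Proof. rewrite /D1; apply: Rdiv_lt_0_compat; nra. Qed.
Lemma D0pos : 0 < D0. Proof. rewrite /D0; apply: Rdiv_lt_0_compat; nra. Qed.

Lemma distQ_ne0 k : dist2 (Qpt i0) (ebasis k) <> 0.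
Proof. rewrite distQ; have := D1pos; have := D0pos; case: (k == i0); lra. Qed.

Lemma S1Q : S1 (Qpt i0) = n / D0 + (/ D1 - / D0).
Proof.
rewrite /S1 (sum_ext (G := fun k => / D0 + (/ D1 - / D0) * (d01 (k == i0) * 1))).
  rewrite sum_add sum_const sum_scal sum_delta -/n; field; move: D0pos D1pos => h0 h1; split; lra.
move=> k; rewrite distQ; case: (k == i0); ring.
Qed.

Lemma S2Q : S2 (Qpt i0) = n / D0 ^ 2 + (/ D1 ^ 2 - / D0 ^ 2).
Proof.
rewrite /S2 (sum_ext (G := fun k => / D0 ^ 2 + (/ D1 ^ 2 - / D0 ^ 2) * (d01 (k == i0) * 1))).
  rewrite sum_add sum_const sum_scal sum_delta -/n; field; move: D0pos D1pos => h0 h1; split; lra.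
move=> k; rewrite distQ; case: (k == i0); field; move: D0pos D1pos => h0 h1; split; lra.
Qed.

Lemma gradQ i : gradf (Qpt i0) i = 0.
Proof.
rewrite gradf_E; last exact: distQ_ne0.
rewrite S1Q distQ QptE /D1 /D0; case: (i == i0); field; lra.
Qed.


Definition muQ := n ^ 3 * (n - 3) / (2 * (n - 2) ^ 2).
Definition sQ := n ^ 2 * (n - 1) / (2 * (n - 2)).
Definition mmQ := - (n ^ 2 * (n - 3) / (2 * (n - 2))).
Definition k1Q := (sQ - muQ) / n.
Definition k2Q := (mmQ - muQ) * n / (n - 1).
Definition wQ (m : 'I_N) := d01 (m == i0) - / n.

Lemma hessQ a b : hessf (Qpt i0) a b = muQ * d01 (a == b) + k1Q + k2Q * wQ a * wQ b.
Proof.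
rewrite hessf_E; last exact: distQ_ne0.
rewrite S1Q S2Q !distQ !QptE /wQ /k1Q /k2Q /mmQ /sQ /muQ /D1 /D0 (eq_sym b a).
have [ha|ha] := eqVneq a i0; have [hb|hb] := eqVneq b i0.
- rewrite ha hb ?eqxx; field; lra.
- have e : (i0 == b) = false by rewrite eq_sym; exact/negbTE.
  rewrite ha ?e; field; lra.
- have e : (a == i0) = false by exact/negbTE.
  rewrite hb ?e; field; lra.
- case: (a == b); field; lra.
Qed.
End Q.

Lemma sumRE N (F : 'I_N -> R) : (\sum_(k < N) F k)%R = \big[Rplus/0]_(k<N) F k.
Proof. by []. Qed.
Lemma mulRE (x y : R) : (x * y)%R = x * y. Proof. by []. Qed.

Ltac Rgoal := match goal with |- @eq _ ?a ?b => change (@eq R a b) end.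

Section Gen.
Variable N : nat.
Variables (H : 'M[R]_N) (mu k1 k2 : R) (w : vec N).
Hypothesis HE : forall a b, H a b = mu * d01 (a == b) + k1 + k2 * w a * w b.

Definition Ssum (v : 'rV[R]_N) := \big[Rplus/0]_(a<N) v ord0 a.
Definition Wsum (v : 'rV[R]_N) := \big[Rplus/0]_(a<N) (v ord0 a * w a).

Lemma Hmul (v : 'rV[R]_N) b :
  (v *m H)%R ord0 b = mu * v ord0 b + k1 * Ssum v + k2 * Wsum v * w b.
Proof.
rewrite mxE sumRE.
rewrite (sum_ext (G := fun j => mu * (d01 (j == b) * v ord0 j) + (k1 * v ord0 j + (k2 * w b) * (v ord0 j * w j)))).
  rewrite !sum_add !sum_scal sum_delta -/(Ssum v) -/(Wsum v); Rgoal; ring.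
move=> j; rewrite mulRE HE; set vj := v ord0 j; case: (j == b); Rgoal; ring.
Qed.

Lemma eig_eqs (v : 'rV[R]_N) a q :
  \big[Rplus/0]_(b<N) w b = 0 -> \big[Rplus/0]_(b<N) (w b * w b) = q ->
  (v *m H)%R = (a *: v)%R ->
  (a - (mu + INR N * k1)) * Ssum v = 0 /\ (a - (mu + k2 * q)) * Wsum v = 0 /\
  forall b, (a - mu) * v ord0 b = k1 * Ssum v + k2 * Wsum v * w b.
Proof.
move=> Hw Hq Hv.
have Hb b : a * v ord0 b = mu * v ord0 b + k1 * Ssum v + k2 * Wsum v * w b.
  by rewrite -Hmul Hv mxE.
split; [|split].
- have : \big[Rplus/0]_(b<N) (a * v ord0 b) = \big[Rplus/0]_(b<N) (mu * v ord0 b + (k1 * Ssum v + (k2 * Wsum v) * w b)).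
    apply: sum_ext => b; rewrite Hb; ring.
  rewrite !sum_add !sum_scal sum_const Hw -/(Ssum v) => h. lra.
- have : \big[Rplus/0]_(b<N) (a * (v ord0 b * w b)) =
         \big[Rplus/0]_(b<N) (mu * (v ord0 b * w b) + ((k1 * Ssum v) * w b + (k2 * Wsum v) * (w b * w b))).
    apply: sum_ext => b; have := Hb b; move=> h; rewrite -Rmult_assoc h; ring.
  rewrite !sum_add !sum_scal Hw Hq -/(Wsum v) => h. lra.
- move=> b; rewrite Rmult_minus_distr_r Hb; ring.
Qed.

End Gen.

Lemma rV_nz N (v : 'rV[R]_N) : (v != 0)%R -> exists b, v ord0 b <> 0.
Proof.
move=> hv; apply: NNPP => hn; move/negP: hv; apply; apply/eqP/matrixP => i j.
rewrite (ord1 i) mxE; apply: NNPP => h; apply: hn; by exists j.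
Qed.

Lemma rowv_scale N (v : 'rV[R]_N) (u : vec N) c : (forall b, v ord0 b = c * u b) ->
  v = (c *: rowv u)%R.
Proof. move=> h; apply/matrixP => i j; rewrite (ord1 i) !mxE h; by []. Qed.

Lemma rank1_eig N (H : 'M[R]_N) a (u : vec N) : (rowv u != 0)%R ->
  (rowv u *m H)%R = (a *: rowv u)%R ->
  (forall v : 'rV[R]_N, (v *m H)%R = (a *: v)%R -> exists c, v = (c *: rowv u)%R) ->
  eig_mult H a = 1%N.
Proof.
move=> hnz hu hall; rewrite /eig_mult.
have -> : \rank (eigenspace H a) = \rank (rowv u).
  apply: eqmx_rank; apply/andP; split.
    apply/row_subP => i; have := row_sub i (eigenspace H a); move/eigenspaceP => e.
    have [c ->] := hall _ e; apply/sub_rVP; by exists c.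
  by apply/eigenspaceP.
by rewrite rank_rV hnz.
Qed.

Lemma unit_noeig0 N (H : 'M[R]_N) : ~~ eigenvalue H 0 -> H \in unitmx.
Proof.
rewrite -row_free_unit -kermx_eq0 /eigenvalue /eigenspace negbK.
have -> : ((0 : R)%:M : 'M[R]_N)%R = 0%R by apply/matrixP => i j; rewrite !mxE GRing.mul0rn.
by rewrite GRing.subr0.
Qed.

Lemma addRE (x y : R) : (x + y)%R = x + y. Proof. by []. Qed.
Lemma oppRE (x : R) : (- x)%R = - x. Proof. by []. Qed.
Lemma oneRE : (1%R : R) = 1. Proof. by []. Qed.
Lemma zeroRE : (0%R : R) = 0. Proof. by []. Qed.

Lemma Ssum_rowv N (u : vec N) : Ssum (rowv u) = \big[Rplus/0]_(a<N) u a.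
Proof. apply: sum_ext => a; by rewrite mxE. Qed.
Lemma Wsum_rowv N (w u : vec N) : Wsum w (rowv u) = \big[Rplus/0]_(a<N) (u a * w a).
Proof. apply: sum_ext => a; by rewrite mxE. Qed.

Lemma rowv_nz N (u : vec N) b : u b <> 0 -> (rowv u != 0)%R.
Proof.
move=> hb; apply/eqP => h; apply: hb; have := congr1 (fun M : 'rV[R]_N => M ord0 b) h.
by rewrite !mxE.
Qed.

Section BB.
Variable N : nat.
Hypothesis hN : (4 <= N)%N.
Let n := INR N.
Let hn : 4 <= n. Proof. exact: INR_ge4. Qed.
Let gam := 4 * n / (n - 1) ^ 2.
Definition HBm : 'M[R]_N := (\matrix_(i,j) hessf (barycenter N) i j)%R.
Let w0 : vec N := fun _ => 0.

Lemma HBE a b : HBm a b = lambda2 N * d01 (a == b) + gam + 0 * w0 a * w0 b.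
Proof. rewrite /HBm mxE hessB //; rewrite /w0 -/n /gam; ring. Qed.

Let i1 : 'I_N := Ordinal (leq_trans (isT : (0 < 4)%N) hN).

Lemma l12 : lambda1 N = lambda2 N + n * gam.
Proof. rewrite /lambda1 /lambda2 /gam -/n; field; lra. Qed.

Lemma HB_B : (rowv (barycenter N) *m HBm)%R = (lambda1 N *: rowv (barycenter N))%R.
Proof.
apply/matrixP => i j; rewrite (ord1 i) (Hmul HBE) Ssum_rowv !mxE /barycenter sum_const -/n.
rewrite mulRE l12 /w0; Rgoal; field; lra.
Qed.

Lemma w0_sum : \big[Rplus/0]_(b<N) w0 b = 0.
Proof. rewrite /w0 sum_const; ring. Qed.
Lemma w0_sum2 : \big[Rplus/0]_(b<N) (w0 b * w0 b) = 0.
Proof. rewrite /w0 (sum_ext (G := fun _ => 0)) ?sum_const => *; ring. Qed.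

Lemma HB_class a : eigenvalue HBm a -> a = lambda1 N \/ a = lambda2 N.
Proof.
move/eigenvalueP => [v hv vnz].
have [h1 [_ h3]] := eig_eqs HBE w0_sum w0_sum2 hv.
case: (Req_dec a (lambda1 N)) => ha; [by left | right].
have hS : Ssum v = 0.
  case: (Rmult_integral _ _ h1) => [h|h] //. exfalso; apply: ha; rewrite l12; rewrite -/n in h; lra.
have [b hb] := rV_nz vnz.
have := h3 b; rewrite hS /w0 => h.
have h' : (a - lambda2 N) * v ord0 b = 0 by rewrite h; ring.
case: (Rmult_integral _ _ h') => [h2|h2]; [lra | by []].
Qed.

Lemma HB_mult1 : eig_mult HBm (lambda1 N) = 1%N.
Proof.
apply: (rank1_eig (u := barycenter N)).
- apply: (rowv_nz (b := i1)); rewrite /barycenter; apply: Rinv_neq_0_compat; rewrite -/n; lra.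
- exact: HB_B.
- move=> v hv; have [_ [_ h3]] := eig_eqs HBE w0_sum w0_sum2 hv.
  exists (n * gam * Ssum v / (lambda1 N - lambda2 N)); apply: rowv_scale => b.
  have := h3 b; rewrite /w0 /barycenter -/n l12 => h.
  have hg : 0 < gam by rewrite /gam; apply: Rdiv_lt_0_compat; nra.
  set vb := v ord0 b in h *; set S := Ssum v in h *.
  have e : n * gam * vb = gam * S by transitivity ((lambda2 N + n * gam - lambda2 N) * vb); [ring | rewrite h; ring].
  have -> : n * gam * S / (lambda2 N + n * gam - lambda2 N) * / n = S / n.
    field; split; [lra | nra].
  apply: (Rmult_eq_reg_l (n * gam)); last nra.
  rewrite e; field; lra.
Qed.

Lemma J_rank1 : \rank (const_mx 1 : 'M[R]_N) = 1%N.
Proof.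
have -> : (const_mx 1 : 'M[R]_N) = ((const_mx 1 : 'cV[R]_N) *m (const_mx 1 : 'rV[R]_N))%R.
  apply/matrixP => i j; rewrite !mxE big_ord1 !mxE; by rewrite GRing.mulr1.
apply/eqP; rewrite eqn_leq; apply/andP; split.
  exact: leq_trans (mxrankM_maxr _ _) (rank_leq_row _).
rewrite lt0n mxrank_eq0; apply/eqP => h.
have := congr1 (fun M : 'M[R]_N => M i1 i1) h; rewrite !mxE big_ord1 !mxE GRing.mulr1 => e.
exact: R1_neq_R0 e.
Qed.

Lemma HB_mult2 : eig_mult HBm (lambda2 N) = (N - 1)%N.
Proof.
rewrite /eig_mult /eigenspace mxrank_ker.
have -> : (HBm - (lambda2 N)%:M)%R = (gam *: (const_mx 1 : 'M[R]_N))%R.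
  apply/matrixP => i j; rewrite !mxE /HBm ?mxE hessB // -/n.
  case: (i == j); rewrite ?GRing.mulr1n ?GRing.mulr0n addRE oppRE mulRE; rewrite ?oneRE ?zeroRE; Rgoal; rewrite /gam; ring.
have hg : gam <> 0 by rewrite /gam; apply: Rgt_not_eq; apply: Rdiv_lt_0_compat; nra.
have -> : \rank (gam *: (const_mx 1 : 'M[R]_N))%R = 1%N.
  rewrite -J_rank1; apply: eqmx_rank; apply/eqmxP; apply: eqmx_scale; apply/eqP; exact: hg.
by [].
Qed.

Lemma HB_unit : HBm \in unitmx.
Proof.
apply: unit_noeig0; apply/negP => /HB_class [].
  rewrite /lambda1 -/n => h; have : 0 < 2 * n ^ 2 / (n - 1) by apply: Rdiv_lt_0_compat; nra. lra.
rewrite /lambda2 -/n => h; have : 0 < 2 * (n - 3) * (n / (n - 1)) ^ 2.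
  apply: Rmult_lt_0_compat; [lra | apply: pow_lt; apply: Rdiv_lt_0_compat; lra].
lra.
Qed.
End BB.

Section QQ.
Variable N : nat.
Hypothesis hN : (4 <= N)%N.
Variable i0 : 'I_N.
Let n := INR N.
Let hn : 4 <= n. Proof. exact: INR_ge4. Qed.
Definition HQm : 'M[R]_N := (\matrix_(i,j) hessf (Qpt i0) i j)%R.
Let w := wQ i0.

Lemma HQE a b : HQm a b = muQ N * d01 (a == b) + k1Q N + k2Q N * w a * w b.
Proof. by rewrite /HQm mxE hessQ. Qed.

Lemma wsum : \big[Rplus/0]_(b<N) w b = 0.
Proof.
rewrite /w /wQ (sum_ext (G := fun b => d01 (b == i0) * 1 + (- / INR N))).
  rewrite sum_add sum_delta sum_const -/n; field; lra.
move=> b; ring.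
Qed.

Lemma wsum2 : \big[Rplus/0]_(b<N) (w b * w b) = (n - 1) / n.
Proof.
rewrite /w /wQ (sum_ext (G := fun b => (1 - 2 / n) * (d01 (b == i0) * 1) + / n ^ 2)).
  rewrite sum_add sum_scal sum_delta sum_const -/n; field; lra.
move=> b; rewrite -/n; case: (b == i0); field; lra.
Qed.

Lemma sQ_id : muQ N + INR N * k1Q N = sQ N.
Proof. rewrite /k1Q -/n; field; lra. Qed.
Lemma mmQ_id : muQ N + k2Q N * ((n - 1) / n) = mmQ N.
Proof. rewrite /k2Q -/n; field; lra. Qed.

Lemma muQ_pos : 0 < muQ N.
Proof. rewrite /muQ -/n; apply: Rdiv_lt_0_compat; [|nra]. apply: Rmult_lt_0_compat; [apply: pow_lt|]; lra. Qed.
Lemma sQ_pos : 0 < sQ N.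
Proof. rewrite /sQ -/n; apply: Rdiv_lt_0_compat; [|nra]. apply: Rmult_lt_0_compat; [apply: pow_lt|]; lra. Qed.
Lemma mmQ_neg : mmQ N < 0.
Proof.
rewrite /mmQ -/n; have : 0 < n ^ 2 * (n - 3) / (2 * (n - 2)).
  apply: Rdiv_lt_0_compat; [|nra]. apply: Rmult_lt_0_compat; [apply: pow_lt|]; lra.
lra.
Qed.

Lemma HQ_class a : eigenvalue HQm a -> a = muQ N \/ a = sQ N \/ a = mmQ N.
Proof.
move/eigenvalueP => [v hv vnz].
have [h1 [h2 h3]] := eig_eqs HQE wsum wsum2 hv.
rewrite sQ_id in h1; rewrite mmQ_id in h2.
case: (Req_dec a (sQ N)) => hs; first by right; left.
case: (Req_dec a (mmQ N)) => hm; first by right; right.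
left.
have hS : Ssum v = 0 by case: (Rmult_integral _ _ h1) => [h|h] //; lra.
have hW : Wsum w v = 0 by case: (Rmult_integral _ _ h2) => [h|h] //; lra.
have [b hb] := rV_nz vnz.
have := h3 b; rewrite hS hW => h.
have h' : (a - muQ N) * v ord0 b = 0 by rewrite h; ring.
case: (Rmult_integral _ _ h') => [h4|h4]; [lra | by []].
Qed.

Lemma HQ_unit : HQm \in unitmx.
Proof.
apply: unit_noeig0; apply/negP => /HQ_class [|[]] h.
- have := muQ_pos; lra.
- have := sQ_pos; lra.
- have := mmQ_neg; lra.
Qed.

Lemma HQ_w : (rowv w *m HQm)%R = (mmQ N *: rowv w)%R.
Proof.
apply/matrixP => i j; rewrite (ord1 i) (Hmul HQE) Ssum_rowv Wsum_rowv wsum wsum2 !mxE.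
rewrite mulRE -mmQ_id; Rgoal; ring.
Qed.

Lemma HQ_mult : eig_mult HQm (mmQ N) = 1%N.
Proof.
apply: (rank1_eig (u := w)).
- apply: (rowv_nz (b := i0)); rewrite /w /wQ eqxx -/n => h.
  have : / n = 1 by lra.
  move=> e; have : n * / n = n by rewrite e; ring.
  rewrite Rinv_r; lra.
- exact: HQ_w.
- move=> v hv; have [h1 [_ h3]] := eig_eqs HQE wsum wsum2 hv.
  rewrite sQ_id in h1.
  have hne : mmQ N - sQ N <> 0 by have := mmQ_neg; have := sQ_pos; lra.
  have hS : Ssum v = 0 by case: (Rmult_integral _ _ h1) => [h|h] //.
  have hne2 : mmQ N - muQ N <> 0 by have := mmQ_neg; have := muQ_pos; lra.
  exists (k2Q N * Wsum w v / (mmQ N - muQ N)); apply: rowv_scale => b.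
  have := h3 b; rewrite hS => h.
  set vb := v ord0 b in h *.
  apply: (Rmult_eq_reg_l (mmQ N - muQ N)) => //.
  rewrite h; field; exact: hne2.
Qed.

Lemma HQ_neg : negativity_index HQm 1.
Proof.
exists [:: mmQ N]; split; [by [] | split; [|split]].
- move=> a; rewrite inE => /eqP ->; exact: mmQ_neg.
- move=> a ha /HQ_class [|[]] h; rewrite inE; apply/eqP.
  + have := muQ_pos; lra.
  + have := sQ_pos; lra.
  + exact: h.
- by rewrite big_seq1 HQ_mult.
Qed.
End QQ.

Definition gln (u : R) := ln (1 + u) + 5 / 8 * (0 + 2 * u * (- (4 / 5)) + u ^ 2).
Definition gln' (u : R) := / (1 + u) * 1 + 5 / 8 * (2 * (- (4 / 5)) + 2 * u).

Lemma gln_der c : -1 < c -> derivable_pt_lim gln c (gln' c).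
Proof.
move=> hc; rewrite /gln /gln'.
apply: (dpl_ext (f := plus_fct (Ranalysis1.comp ln (fun u => 1 + u * 1)) (mult_real_fct (5/8) (fun u => 0 + 2 * u * (- (4 / 5)) + u ^ 2)))).
  move=> t; rewrite /plus_fct /mult_real_fct /Ranalysis1.comp; congr (ln _ + _); ring.
eapply dpl_eq; last first.
  apply: derivable_pt_lim_plus.
    apply: derivable_pt_lim_comp; first exact: dpl_lin.
    apply: derivable_pt_lim_ln; lra.
  apply: derivable_pt_lim_scal; exact: dpl_quad.
congr (/ _ * _ + _); ring.
Qed.

Lemma gln'_sign c : -1/5 <= c -> c * gln' c >= 0.
Proof.
move=> hc; rewrite /gln'.
have h1 : 0 < 1 + c by lra.
have e : / (1 + c) * (1 + c) = 1 by field; lra.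
have hr : 0 < / (1 + c) by apply: Rinv_0_lt_compat.
have -> : / (1 + c) * 1 + 5 / 8 * (2 * - (4 / 5) + 2 * c) = / (1 + c) * (c * (1/4 + 5/4 * c)).
  field; lra.
have : 0 <= c * c * (1/4 + 5/4 * c) by apply: Rmult_le_pos; nra.
nra.
Qed.

Lemma ln_lower u : -1/5 <= u <= 1/5 -> u - 5/8 * u ^ 2 <= ln (1 + u).
Proof.
move=> [hu1 hu2].
have g0 : gln 0 = 0 by rewrite /gln Rplus_0_r ln_1; ring.
suff : 0 <= gln u by rewrite /gln; lra.
case: (Rtotal_order u 0) => [hlt|[heq|hgt]].
- have [c [hc1 hc2]] := MVT_cor2 gln gln' u 0 hlt (fun c hc => gln_der (c:=c) ltac:(lra)).
  have := gln'_sign (c:=c) ltac:(lra).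
  move: hc1; rewrite g0 => hc1 hs.
  have : gln' c <= 0.
    apply: NNPP => h; have : c * gln' c < 0 by apply: Rmult_neg_pos; lra.
    lra.
  nra.
- by rewrite heq g0; lra.
- have [c [hc1 hc2]] := MVT_cor2 gln gln' 0 u hgt (fun c hc => gln_der (c:=c) ltac:(lra)).
  have := gln'_sign (c:=c) ltac:(lra).
  move: hc1; rewrite g0 => hc1 hs.
  have : 0 <= gln' c.
    apply: NNPP => h; have : c * gln' c < 0 by apply: Rmult_pos_neg; lra.
    lra.
  nra.
Qed.

Section LM.
Variable N : nat.
Hypothesis hN : (4 <= N)%N.
Let n := INR N.
Let hn : 4 <= n. Proof. exact: INR_ge4. Qed.
Let c := (n - 1) / n.
Let hc1 : 3 / 4 <= c. Proof. rewrite /c; apply: (Rmult_le_reg_r n); [lra|]; field_simplify; lra. Qed.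
Let hc2 : c <= 1. Proof. rewrite /c; apply: (Rmult_le_reg_r n); [lra|]; field_simplify; lra. Qed.

Variable y : vec N.
Let sg := \big[Rplus/0]_(k<N) y k.
Let p := dist2 y (barycenter N).
Let A := \big[Rplus/0]_(k<N) (y k - sg / n) ^ 2.

Lemma p_nrm : p = nrm2 y - 2 / n * sg + / n.
Proof.
rewrite /p /dist2 /barycenter (sum_ext (G := fun k => y k ^ 2 + ((-2/n) * y k + / n ^ 2))).
  rewrite !sum_add sum_scal sum_const -/n -/sg -/(nrm2 y); field; lra.
move=> k; rewrite -/n; field; lra.
Qed.

Lemma p_A : p = A + n * (sg / n - / n) ^ 2.
Proof.
rewrite /p /dist2 /barycenter.
rewrite (sum_ext (G := fun k => (y k - sg / n) ^ 2 + ((2 * (sg / n - / n)) * y k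
     + ((sg / n - / n) ^ 2 - 2 * (sg / n - / n) * (sg / n))))).
  rewrite !sum_add sum_scal !sum_const -/n -/sg -/A; field; lra.
move=> k; rewrite -/n; ring.
Qed.

Let w k := dist2 y (ebasis k) - c.

Lemma w_E k : w k = p + 2 * (sg / n - y k).
Proof. rewrite /w dist2_e p_nrm /c; field; lra. Qed.

Lemma sum_w : \big[Rplus/0]_(k<N) w k = n * p.
Proof.
rewrite (sum_ext (G := fun k => (p + 2 * (sg / n)) + (-2) * y k)).
  rewrite !sum_add !sum_const !sum_scal -/n -/sg; field; lra.
move=> k; rewrite w_E; ring.
Qed.

Lemma sum_w2 : \big[Rplus/0]_(k<N) (w k ^ 2) = n * p ^ 2 + 4 * A.
Proof.
rewrite (sum_ext (G := fun k => (p ^ 2 + 4 * p * (sg / n)) + ((-4 * p) * y k + 4 * (y k - sg / n) ^ 2))).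
  rewrite !sum_add !sum_const !sum_scal -/n -/sg -/A; field; lra.
move=> k; rewrite w_E; ring.
Qed.

Lemma p_ge0 : 0 <= p. Proof. exact: dist2_ge0. Qed.
Lemma A_ge0 : 0 <= A. Proof. apply: sum_ge0 => k; exact: pow2_ge_0. Qed.

Lemma w2_le : \big[Rplus/0]_(k<N) (w k ^ 2) <= n * p ^ 2 + 4 * p.
Proof.
rewrite sum_w2; have := p_A; have : 0 <= n * (sg / n - / n) ^ 2.
  apply: Rmult_le_pos; [lra | exact: pow2_ge_0].
lra.
Qed.

Hypothesis hp : p < / (100 * n) * / (100 * n).

Lemma np_small : n * p <= / 10.
Proof.
have h : / (100 * n) * / (100 * n) <= / (10 * n).
  rewrite -Rinv_mult; apply: Rinv_le_contravar; nra.
have : n * p <= n * / (10 * n) by apply: Rmult_le_compat_l; lra.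
have -> : n * / (10 * n) = / 10 by field; lra.
done.
Qed.

Lemma p_small : p <= / 1000.
Proof.
have h : / (100 * n) * / (100 * n) <= / 1000.
  rewrite -Rinv_mult; apply: Rinv_le_contravar; nra.
lra.
Qed.

Lemma w_bound k : - (c / 5) <= w k <= c / 5.
Proof.
have h1 : w k ^ 2 <= \big[Rplus/0]_(k<N) (w k ^ 2).
  exact: (@sum_ge_term N (fun k => w k ^ 2) k (fun j => pow2_ge_0 _)).
have h2 := w2_le. have h3 := np_small. have h4 := p_small. have h5 := p_ge0.
have h6 : n * p ^ 2 <= p by nra.
have h7 : w k ^ 2 <= (c / 5) ^ 2 by nra.
split; nra.
Qed.

Lemma dk_pos k : 0 < dist2 y (ebasis k).
Proof. have := w_bound k; rewrite /w; lra. Qed.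

Lemma ln_dk k : ln c + / c * w k + (- (5/8) / c ^ 2) * w k ^ 2 <= ln (dist2 y (ebasis k)).
Proof.
have hb := w_bound k.
have -> : dist2 y (ebasis k) = c * (1 + w k / c) by rewrite /w; field; lra.
rewrite ln_mult; [|lra|].
- have := ln_lower (u := w k / c) ltac:(split; [apply: (Rmult_le_reg_r c); [lra|]; field_simplify; lra|
                                              apply: (Rmult_le_reg_r c); [lra|]; field_simplify; lra]).
  have -> : w k / c - 5 / 8 * (w k / c) ^ 2 = / c * w k + - (5 / 8) / c ^ 2 * w k ^ 2 by field; lra.
  lra.
- have : - (1/5) <= w k / c.
    apply: (Rmult_le_reg_r c); [lra|]; field_simplify; lra.
  lra.
Qed.

Lemma flog_ge : flog (barycenter N) <= flog y.
Proof.
rewrite /flog /Fprod.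
rewrite ln_prod; last by move=> k; rewrite distB //; rewrite -/n -/c; lra.
rewrite ln_prod; last exact: dk_pos.
rewrite (sum_ext (G := fun _ => ln c)); last by move=> k; rewrite distB.
apply: (Rle_trans _ (\big[Rplus/0]_(k<N) (ln c + (/ c * w k + (- (5/8) / c ^ 2) * w k ^ 2)))).
  rewrite sum_const !sum_add !sum_scal sum_const sum_w -/n.
  have h2 := w2_le. have h3 := np_small. have h5 := p_ge0.
  have hcc : 0 < / c ^ 2 by apply: Rinv_0_lt_compat; nra.
  have : 0 <= / c * (n * p) + - (5 / 8) / c ^ 2 * \big[Rplus/0]_(k<N) (w k ^ 2).
    have -> : / c * (n * p) + - (5 / 8) / c ^ 2 * \big[Rplus/0]_(k<N) (w k ^ 2)
            = / c ^ 2 * (c * n * p - 5/8 * \big[Rplus/0]_(k<N) (w k ^ 2)) by field; lra.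
    apply: Rmult_le_pos; [lra|].
    have : c * n = n - 1 by rewrite /c; field; lra.
    nra.
  lra.
apply: sum_le => k; have := ln_dk k; lra.
Qed.
End LM.

Lemma locmin N (hN : (4 <= N)%N) : exists d : R, 0 < d /\
     forall y : vec N, dist2 y (barycenter N) < d * d ->
       flog (barycenter N) <= flog y.
Proof.
have hn := INR_ge4 hN.
exists (/ (100 * INR N)); split; first by apply: Rinv_0_lt_compat; lra.
move=> y hy; exact: flog_ge.
Qed.

Lemma dist2_xx N (x : vec N) : dist2 x x = 0.
Proof. rewrite /dist2 (sum_ext (G := fun _ => 0)) ?sum_const => *; ring. Qed.

Lemma Fprod_ge0 N (x : vec N) : 0 <= Fprod x.
Proof. apply: prod_ge0 => k; exact: dist2_ge0. Qed.

Lemma Fprod_e N (i : 'I_N) : Fprod (ebasis i) = 0.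
Proof.
rewrite /Fprod (bigD1 i) //= dist2_xx; exact: Rmult_0_l.
Qed.

Lemma Fprod_eq0 N (x : vec N) : Fprod x = 0 -> exists k, dist2 x (ebasis k) = 0.
Proof.
move=> h; apply: NNPP => hn; move: h; rewrite /Fprod.
apply: (big_ind (fun a => a <> 0)) => //.
- move=> a b ha hb; exact: Rmult_integral_contrapositive_currified.
- move=> k _ e; apply: hn; by exists k.
Qed.

Lemma minimizers N (hN : (4 <= N)%N) (x : vec N) :
  (forall y : vec N, Fprod x <= Fprod y) <-> exists i : 'I_N, x = ebasis i.
Proof.
split.
- move=> h; pose i1 : 'I_N := Ordinal (leq_trans (isT : (0 < 4)%N) hN).
  have := h (ebasis i1); rewrite Fprod_e => h1; have := Fprod_ge0 x => h2.
  have [k hk] := Fprod_eq0 (Rle_antisym _ _ h1 h2).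
  exists k; exact: dist2_eq0.
- move=> [i ->] y; rewrite Fprod_e; exact: Fprod_ge0.
Qed.

Theorem proposition7p3 (N : nat) (hN : (4 <= N)%N) :
  (* the absolute minimizers of F are exactly e_1, ..., e_N *)
  (forall x : vec N,
     (forall y : vec N, Fprod x <= Fprod y) <-> exists i : 'I_N, x = ebasis i) /\
  (* B is a critical point of f = log F ... *)
  critical_point (@flog N) (barycenter N) /\
  (* ... whose Hessian has eigenvalue 2N^2/(N-1) of multiplicity 1 with
     eigenvector B, eigenvalue 2(N-3)(N/(N-1))^2 of multiplicity N-1,
     no other eigenvalue, and is nondegenerate ... *)
  (exists H : 'M[R]_N,
     is_hessian (@flog N) (barycenter N) H /\
     mulmx (rowv (barycenter N)) H
       = GRing.scale (lambda1 N) (rowv (barycenter N)) /\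
     eig_mult H (lambda1 N) = 1%N /\
     eig_mult H (lambda2 N) = (N - 1)%N /\
     (forall a : R, eigenvalue H a ->
        a = lambda1 N \/
        a = lambda2 N) /\
     nondegenerate_hess H) /\
  (* ... so B is a local minimum of f *)
  (exists d : R, 0 < d /\
     forall y : vec N, dist2 y (barycenter N) < d * d ->
       flog (barycenter N) <= flog y) /\
  (* the points Q_i are nondegenerate critical points of negativity index 1 *)
  (forall i : 'I_N,
     critical_point (@flog N) (Qpt i) /\
     exists H : 'M[R]_N,
       is_hessian (@flog N) (Qpt i) H /\ nondegenerate_hess H /\
       negativity_index H 1).
Proof.
have hn := INR_ge4 hN.
have hBpos : forall k, 0 < dist2 (barycenter N) (ebasis k).
  move=> k; rewrite distB //; apply: Rdiv_lt_0_compat; lra.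
split; [exact: minimizers|].
split.
  move=> i; rewrite -(gradB hN i); exact: partial_flog.
split.
  exists (HBm N); split; [|split; [exact: HB_B|split; [exact: HB_mult1|split; [exact: HB_mult2|split]]]].
  - apply: (hessian_gen (m := (INR N - 1) / INR N)).
      apply: Rdiv_lt_0_compat; lra.
    move=> k; rewrite distB //; lra.
  - exact: HB_class.
  - exact: HB_unit.
split; [exact: locmin|].
move=> i; split.
  move=> j; rewrite -(gradQ hN i j); apply: partial_flog => k.
  rewrite distQ //; have := D1pos hN; have := D0pos hN; case: (k == i); lra.
exists (HQm i); split; [|split; [exact: HQ_unit| exact: HQ_neg]].
apply: (hessian_gen (m := D1 N)); first exact: D1pos.
move=> k; rewrite distQ //; case: (k == i); first lra.
rewrite /D1 /D0; apply: (Rmult_le_reg_r (INR N * (INR N - 1))); first nra.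
field_simplify; try lra. nra.
Qed.
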